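(* If $(x,y)$ and $(x,y')$ are both $\mathbf{x}$-vertices of $R$, then $d_R((x,y),(x,y'))\le d(\bar B)$.
   Context: Let $A\in\mathbb{R}^{m_1\times n_1}$, nonzero $a\in\mathbb{R}^{1\times n_1}$, nonzero $b\in\mathbb{R}^{1\times n_2}$, $B\in\mathbb{R}^{m_2\times n_2}$, $c_A\in\mathbb{R}^{m_1}$, $c_B\in\mathbb{R}^{m_2}$, $c_a,c_b\in\mathbb{R}$, and $R=\{(x,y)\in\mathbb{R}^{n_1}\times\mathbb{R}^{n_2}: Ax=c_A,\ ax+by=c_a+c_b,\ By=c_B,\ x,y\ge 0\}$. Assume $R$ is simple (nondegenerate). Let $P_A=\{x: Ax=c_A, x\ge 0\}$ and $\bar B=\begin{bmatrix}b\\ B\end{bmatrix}$. A vertex $(x,y)$ of $R$ is an $\mathbf{x}$-vertex if $x$ is a vertex of $P_A$. $d_R(v,w)$ is the minimum number of edges of an edge walk in $R$ from $v$ to $w$. For a polyhedron $P$, $d(P)$ is its combinatorial diameter (maximum distance over pairs of vertices), and for a matrix $M\in\mathbb{R}^{m\times n}$, $d(M):=\max\{d(\{z: Mz=r, z\ge 0\}): r\in\mathbb{R}^m\}$. *)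

(* Defs.v *)
From HB Require Import structures.
From mathcomp Require Import all_boot all_order all_algebra.
Set Implicit Arguments. Unset Strict Implicit. Unset Printing Implicit Defensive.
Import Order.TTheory GRing.Theory Num.Theory.
Local Open Scope ring_scope.

Section Poly.
Variables (R : realFieldType) (m n : nat) (M : 'M[R]_(m, n)) (r : 'cV[R]_m).

Definition inP (z : 'cV[R]_n) : Prop := M *m z = r /\ forall i, 0 <= z i 0.

Definition valid (c : 'rV[R]_n) (d : R) : Prop :=
  forall z, inP z -> (c *m z) 0 0 <= d.

Definition is_vertex (v : 'cV[R]_n) : Prop :=
  inP v /\ exists c d, valid c d /\
    forall z, inP z -> ((c *m z) 0 0 = d <-> z = v).

Definition is_edge (v w : 'cV[R]_n) : Prop :=
  v != w /\ inP v /\ inP w /\ exists c d, valid c d /\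
    forall z, inP z -> ((c *m z) 0 0 = d <->
      exists t : R, 0 <= t <= 1 /\ z = t *: v + (1 - t) *: w).

(* an edge walk v -> s_1 -> ... -> s_k (= w) ; it has size s edges *)
Fixpoint walk (v : 'cV[R]_n) (s : seq 'cV[R]_n) (w : 'cV[R]_n) : Prop :=
  match s with
  | [::] => v = w
  | u :: s' => is_edge v u /\ walk u s' w
  end.

Definition dist_le (v w : 'cV[R]_n) (k : nat) : Prop :=
  exists s, (size s <= k)%N /\ walk v s w.

Definition simple_poly : Prop :=
  forall v, is_vertex v -> #|[set i : 'I_n | v i 0 != 0]| = \rank M.

End Poly.

Definition diam_mx_le (R : realFieldType) (m n : nat) (M : 'M[R]_(m, n)) (D : nat) :=
  forall (r : 'cV[R]_m) u v, is_vertex M r u -> is_vertex M r v -> dist_le M r u v D.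

Section Coupled.
Variables (R : realFieldType) (m1 n1 m2 n2 : nat) (A : 'M[R]_(m1, n1))
  (a : 'rV[R]_n1) (b : 'rV[R]_n2) (B : 'M[R]_(m2, n2))
  (cA : 'cV[R]_m1) (cB : 'cV[R]_m2) (ca cb : R).

Definition MR : 'M[R]_(m1 + (1 + m2), n1 + n2) :=
  col_mx (row_mx A 0) (col_mx (row_mx a b) (row_mx 0 B)).
Definition rR : 'cV[R]_(m1 + (1 + m2)) :=
  col_mx cA (col_mx (ca + cb)%:M cB).
Definition Bbar : 'M[R]_(1 + m2, n2) := col_mx b B.

Definition x_vertex (x : 'cV[R]_n1) (y : 'cV[R]_n2) : Prop :=
  is_vertex MR rR (col_mx x y) /\ is_vertex A cA x.
End Coupled.

(* Main.v *)
Require Import Defs.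
From mathcomp Require Import all_boot all_order all_algebra.
From mathcomp Require Import lra.
Set Implicit Arguments. Unset Strict Implicit. Unset Printing Implicit Defensive.
Import Order.TTheory GRing.Theory Num.Theory.
Local Open Scope ring_scope.

Section Gen.
Variables (R : realFieldType) (m n : nat) (M : 'M[R]_(m, n)) (r : 'cV[R]_m).

Lemma inP_conv t u w : 0 <= t <= 1 -> inP M r u -> inP M r w ->
  inP M r (t *: u + (1 - t) *: w).
Proof.
move=> /andP [t0 t1] [Mu u0] [Mw w0]; split.
  by rewrite mulmxDr -!scalemxAr Mu Mw -scalerDl addrC subrK scale1r.
move=> i; rewrite !mxE; apply: addr_ge0; apply: mulr_ge0 => //.
by rewrite subr_ge0.
Qed.

Lemma supp_face c d p z : valid M r c d -> inP M r p -> (c *m p) 0 0 = d ->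
  inP M r z -> (forall i, p i 0 = 0 -> z i 0 = 0) -> (c *m z) 0 0 = d.
Proof.
move=> Hv Pp cp Pz Hs.
have [Mp p0] := Pp; have [Mz z0] := Pz.
pose S := \sum_i z i 0 / p i 0.
have S0 : 0 <= S by apply: sumr_ge0 => i _; exact: divr_ge0 (z0 _) (p0 _).
have S1 : 0 < 1 + S by lra.
pose e := (1 + S)^-1.
have e0 : 0 < e by rewrite invr_gt0.
pose q := p + e *: (p - z).
have Hq : inP M r q.
  split; first by rewrite mulmxDr -scalemxAr mulmxBr Mp Mz subrr scaler0 addr0.
  move=> i; rewrite !mxE.
  have pi0 := p0 i; have zi0 := z0 i.
  case: (eqVneq (p i 0) 0) => Hpi.
    by rewrite Hpi (Hs i Hpi) subrr mulr0 addr0.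
  have h1 : z i 0 / p i 0 <= S.
    rewrite /S (bigD1 i) //= lerDl; apply: sumr_ge0 => j _; exact: divr_ge0 (z0 _) (p0 _).
  have h2 : z i 0 <= p i 0 * (1 + S).
    have -> : z i 0 = p i 0 * (z i 0 / p i 0) by rewrite mulrC divfK.
    by apply: ler_wpM2l => //; lra.
  have h3 : e * z i 0 <= p i 0.
    have : e * z i 0 <= e * (p i 0 * (1 + S)) by apply: ler_wpM2l => //; apply: ltW.
    by rewrite [p i 0 * _]mulrC mulrA mulVf ?mul1r // gt_eqF.
  have h4 : 0 <= e * p i 0 by apply: mulr_ge0 => //; apply: ltW.
  rewrite mulrBr; lra.
have := Hv q Hq.
have -> : (c *m q) 0 0 = (c *m p) 0 0 + e * ((c *m p) 0 0 - (c *m z) 0 0).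
  rewrite /q mulmxDr -scalemxAr mulmxBr; move: (c *m p) (c *m z) => X Y; by rewrite !mxE.
have := Hv z Pz.
rewrite cp => h1 h2.
have : e * (d - (c *m z) 0 0) <= 0 by lra.
rewrite pmulr_rle0 // => h3; lra.
Qed.

Lemma vertex_supp v z : is_vertex M r v -> inP M r z ->
  (forall i, v i 0 = 0 -> z i 0 = 0) -> z = v.
Proof.
move=> [Pv [c [d [Hv Hc]]]] Pz Hs.
apply/(Hc z Pz); apply: (supp_face Hv Pv _ Pz Hs).
by apply/(Hc v Pv).
Qed.

Definition scert (p : 'cV[R]_n) : 'rV[R]_n :=
  - \row_(k < n) (if p k 0 == 0 then (1 : R) else 0).

Lemma scertE (p z : 'cV[R]_n) :
  (scert p *m z) 0 0 = - \sum_k (if p k 0 == 0 then z k 0 else 0).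
Proof.
rewrite /scert mulNmx mxE mxE; congr (- _); apply: eq_bigr => k _.
by rewrite mxE; case: ifP => _; rewrite ?mul1r ?mul0r.
Qed.

Lemma scert_le (p z : 'cV[R]_n) : (forall k, 0 <= z k 0) -> (scert p *m z) 0 0 <= 0.
Proof.
move=> H; rewrite scertE oppr_le0; apply: sumr_ge0 => k _.
by case: ifP.
Qed.

Lemma scert_eq0 (p z : 'cV[R]_n) : (forall k, 0 <= z k 0) ->
  ((scert p *m z) 0 0 = 0 <-> forall k, p k 0 = 0 -> z k 0 = 0).
Proof.
move=> H; rewrite scertE; split.
  move/eqP; rewrite oppr_eq0 => /eqP Hs k pk.
  have := psumr_eq0P _ Hs (i := k); rewrite pk eqxx; apply => //.
  by move=> i _; case: ifP.
move=> Hs; rewrite big1 ?oppr0 // => k _.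
by case: eqP => // /Hs.
Qed.

End Gen.

Lemma col_all (R : realFieldType) n1 n2 (P : R -> R -> Prop)
  (p x : 'cV[R]_n1) (q z : 'cV[R]_n2) :
  (forall k, P (col_mx p q k 0) (col_mx x z k 0)) <->
  (forall i, P (p i 0) (x i 0)) /\ (forall j, P (q j 0) (z j 0)).
Proof.
split.
  move=> H; split => i.
    by have := H (lshift n2 i); rewrite !col_mxEu.
  by have := H (rshift n1 i); rewrite !col_mxEd.
case=> Hx Hz k; rewrite -(splitK k); case: (split k) => i /=.
  by rewrite !col_mxEu.
by rewrite !col_mxEd.
Qed.

Section Coupled.
Variables (R : realFieldType) (m1 n1 m2 n2 : nat) (A : 'M[R]_(m1, n1))
  (a : 'rV[R]_n1) (b : 'rV[R]_n2) (B : 'M[R]_(m2, n2))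
  (cA : 'cV[R]_m1) (cB : 'cV[R]_m2) (ca cb : R).

Definition r' (x : 'cV[R]_n1) : 'cV[R]_(1 + m2) :=
  col_mx ((ca + cb)%:M - a *m x) cB.

Lemma MR_mul (x : 'cV[R]_n1) (z : 'cV[R]_n2) : MR A a b B *m col_mx x z =
  col_mx (A *m x) (col_mx (a *m x + b *m z) (B *m z)).
Proof. by rewrite /MR !mul_col_mx !mul_row_col !mul0mx addr0 add0r. Qed.

Lemma inR (x : 'cV[R]_n1) (z : 'cV[R]_n2) : inP (MR A a b B) (rR cA cB ca cb) (col_mx x z) <->
  inP A cA x /\ inP (Bbar b B) (r' x) z.
Proof.
split.
  case=> HM Hn; move: HM; rewrite MR_mul /rR => /eq_col_mx [h1 /eq_col_mx [h2 h3]].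
  have [Hx Hz] := (col_all (fun _ v => 0 <= v) x x z z).1 Hn.
  split; split => //.
  by rewrite /Bbar mul_col_mx /r' -h2 h3 [a *m x + _]addrC addrK.
case=> [[h1 hx] [h2 hz]]; split; last first.
  by apply/(col_all (fun _ v => 0 <= v) x x z z).
move: h2; rewrite /Bbar mul_col_mx /r' => /eq_col_mx [h2 h3].
by rewrite MR_mul h1 /rR h2 h3 subrKC.
Qed.

Lemma y_vertex (x : 'cV[R]_n1) (y : 'cV[R]_n2) : is_vertex (MR A a b B) (rR cA cB ca cb) (col_mx x y) ->
  is_vertex (Bbar b B) (r' x) y.
Proof.
case=> Hin [c [d [Hv Hc]]].
have [HA HB] := (inR x y).1 Hin.
split => //.
exists (rsubmx c), (d - (lsubmx c *m x) 0 0).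
have key : forall z, (c *m col_mx x z) 0 0 =
    (lsubmx c *m x) 0 0 + (rsubmx c *m z) 0 0.
  by move=> z; rewrite -{1}(hsubmxK c) mul_row_col mxE.
split.
  move=> z Hz; have := Hv (col_mx x z) ((inR x z).2 (conj HA Hz)).
  rewrite key; lra.
move=> z Hz; have := Hc (col_mx x z) ((inR x z).2 (conj HA Hz)).
rewrite key => H; split.
  move=> h; have : col_mx x z = col_mx x y by apply/H.1; lra.
  by case/eq_col_mx.
move=> Ez; subst z; have := H.2 erefl.
lra.
Qed.

Lemma edge_lift (x : 'cV[R]_n1) (u w : 'cV[R]_n2) : is_vertex A cA x -> is_edge (Bbar b B) (r' x) u w ->
  is_edge (MR A a b B) (rR cA cB ca cb) (col_mx x u) (col_mx x w).
Proof.
move=> Vx [uw [Pu [Pw [c [d [Hv Hc]]]]]].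
have PA := Vx.1.
have Pu' := (inR x u).2 (conj PA Pu).
have Pw' := (inR x w).2 (conj PA Pw).
split.
  by apply: contra uw => /eqP /eq_col_mx [_ ->].
split => //; split => //.
exists (scert (col_mx x u + col_mx x w)), 0; split.
  by move=> v [_ Hn]; apply: scert_le.
move=> v Hvin.
rewrite scert_eq0; last exact: Hvin.2.
split.
  rewrite -(vsubmxK v) in Hvin *.
  move: (usubmx v) (dsubmx v) Hvin => x' z Hvin.
  rewrite add_col_mx => Hs.
  have [Hs1 Hs2] := (col_all (fun p v => p = 0 -> v = 0) _ _ _ _).1 Hs.
  have [PA' Pz] := (inR x' z).1 Hvin.
  have ex : x' = x.
    apply: (vertex_supp Vx PA') => i h; apply: Hs1; by rewrite mxE h addr0.
  rewrite ex in Pz *.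
  have t01 : (0 : R) <= (2^-1 : R) <= 1 by apply/andP; split; lra.
  have Pm := inP_conv t01 Pu Pw.
  have cm : (c *m (2^-1 *: u + (1 - 2^-1) *: w)) 0 0 = d.
    by apply/(Hc _ Pm); exists 2^-1; split.
  have cz : (c *m z) 0 0 = d.
    apply: (supp_face Hv Pm cm Pz) => i; rewrite !mxE => h; apply: Hs2; rewrite mxE.
    have := Pu.2 i; have := Pw.2 i; lra.
  have [t [tt Ez]] := (Hc z Pz).1 cz.
  rewrite Ez; exists t; split => //.
  rewrite !scale_col_mx add_col_mx -scalerDl.
  have -> : t + (1 - t) = 1 by lra.
  by rewrite scale1r.
case=> t [tt ->] k.
have [_ Hn1] := Pu'; have [_ Hn2] := Pw'.
have := Hn1 k; have := Hn2 k.
move: (col_mx x u) (col_mx x w) => U W h1 h2.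
rewrite !mxE => h.
have e1 : U k 0 = 0 by lra.
have e2 : W k 0 = 0 by lra.
by rewrite e1 e2 !mulr0 addr0.
Qed.

End Coupled.

Theorem lemma3 (R : realFieldType) (m1 n1 m2 n2 : nat) (A : 'M[R]_(m1, n1))
  (a : 'rV[R]_n1) (b : 'rV[R]_n2) (B : 'M[R]_(m2, n2))
  (cA : 'cV[R]_m1) (cB : 'cV[R]_m2) (ca cb : R) :
  a != 0 -> b != 0 ->
  simple_poly (MR A a b B) (rR cA cB ca cb) ->
  forall (x : 'cV[R]_n1) (y y' : 'cV[R]_n2),
  x_vertex A a b B cA cB ca cb x y -> x_vertex A a b B cA cB ca cb x y' ->
  forall D : nat, diam_mx_le (Bbar b B) D ->
  dist_le (MR A a b B) (rR cA cB ca cb) (col_mx x y) (col_mx x y') D.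
Proof.
move=> _ _ _ x y y' [Vy Vx] [Vy' _] D Hd.
have [s [Hs Hw]] := Hd (r' a cB ca cb x) y y' (y_vertex Vy) (y_vertex Vy').
exists (map (col_mx x) s); rewrite size_map; split => //.
elim: s y Hw {Hs Vy} => [|u s IH] y0 /=; first by move=> ->.
case=> He Hw; split; [exact: edge_lift | exact: IH].
Qed.
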